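(* Let $R(m,n)$ be a rectangular supergrid graph with $m\ge 3$ and $n\ge 2$, and let $s=w=(1,1)$, $t=z=(2,1)$ and $f=(3,1)$. Then there exists a Hamiltonian $(s,t)$-path $P$ of $R(m,n)$ such that the edge $(z,f)$ belongs to $P$.
   Context: The rectangular supergrid graph $R(m,n)$ has vertex set $\{(x,y)\in\mathbb{Z}^2:1\le x\le m,\ 1\le y\le n\}$, two distinct vertices $u,v$ being adjacent iff $|u_x-v_x|\le 1$ and $|u_y-v_y|\le 1$. A Hamiltonian $(s,t)$-path is a simple path from $s$ to $t$ visiting every vertex exactly once. *)

(* Defs.v *)
From mathcomp Require Import all_boot.
Set Implicit Arguments. Unset Strict Implicit. Unset Printing Implicit Defensive.

Definition vertex := (nat * nat)%type.

Definition in_grid (m n : nat) (v : vertex) : bool :=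
  (1 <= v.1 <= m) && (1 <= v.2 <= n).

Definition close (a b : nat) : bool := (a <= b.+1) && (b <= a.+1).

Definition sg_adj (m n : nat) (u v : vertex) : bool :=
  [&& in_grid m n u, in_grid m n v, u != v, close u.1 v.1 & close u.2 v.2].

Definition ham_path (m n : nat) (s t : vertex) (p : seq vertex) : Prop :=
  [/\ p != [::], head s p = s, last s p = t & uniq p] /\
  [/\ path (sg_adj m n) s (behead p),
      all (in_grid m n) p
    & forall v, in_grid m n v -> v \in p].

Definition path_has_edge (p : seq vertex) (u v : vertex) : Prop :=
  exists i, i.+1 < size p /\
    ((nth u p i = u /\ nth u p i.+1 = v) \/ (nth u p i = v /\ nth u p i.+1 = u)).

(* Main.v *)
Require Import Defs.
From mathcomp Require Import all_boot zify.

Fixpoint colUp (x y k : nat) : seq vertex :=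
  if k is k'.+1 then (x, y) :: colUp x y.+1 k' else [::].
Fixpoint rowLR (x k y : nat) : seq vertex :=
  if k is k'.+1 then (x, y) :: rowLR x.+1 k' y else [::].
Fixpoint rowRL (x k y : nat) : seq vertex :=
  if k is k'.+1 then (x, y) :: rowRL x.-1 k' y else [::].
Fixpoint zig (x k y : nat) : seq vertex :=
  if k is k'.+1 then (x, y.+1) :: (x, y) :: zig x.+1 k' y else [::].

Lemma mem_colUp x y k a b : ((a, b) \in colUp x y k) = (a == x) && (y <= b < y + k).
Proof.
elim: k y => [|k IH] y /=; first by rewrite in_nil; apply/idP/idP => H; lia.
by rewrite in_cons IH xpair_eqE; apply/idP/idP => H; lia.
Qed.
Lemma mem_rowLR x k y a b : ((a, b) \in rowLR x k y) = (x <= a < x + k) && (b == y).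
Proof.
elim: k x => [|k IH] x /=; first by rewrite in_nil; apply/idP/idP => H; lia.
by rewrite in_cons IH xpair_eqE; apply/idP/idP => H; lia.
Qed.
Lemma mem_rowRL x k y a b : k <= x -> ((a, b) \in rowRL x k y) = (x < a + k) && (a <= x) && (b == y).
Proof.
elim: k x => [|k IH] x /= Hk; first by rewrite in_nil; apply/idP/idP => H; lia.
by rewrite in_cons IH ?xpair_eqE; [apply/idP/idP => H; lia | lia].
Qed.
Lemma mem_zig x k y a b : ((a, b) \in zig x k y) = (x <= a < x + k) && ((b == y) || (b == y.+1)).
Proof.
elim: k x => [|k IH] x /=; first by rewrite in_nil; apply/idP/idP => H; lia.
by rewrite !in_cons IH !xpair_eqE; apply/idP/idP => H; lia.
Qed.

Lemma uniq_colUp x y k : uniq (colUp x y k).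
Proof. elim: k y => [|k IH] y //=; rewrite IH mem_colUp andbT; lia. Qed.
Lemma uniq_rowLR x k y : uniq (rowLR x k y).
Proof. elim: k x => [|k IH] x //=; rewrite IH mem_rowLR andbT; lia. Qed.
Lemma uniq_rowRL x k y : k <= x -> uniq (rowRL x k y).
Proof. elim: k x => [|k IH] x //= H; rewrite IH ?mem_rowRL ?andbT; lia. Qed.
Lemma uniq_zig x k y : uniq (zig x k y).
Proof. elim: k x => [|k IH] x //=; rewrite IH !in_cons !mem_zig !xpair_eqE !andbT; lia. Qed.

Section G.
Variables m n : nat.
Local Notation e := (sg_adj m n).
Lemma adjI a b c d : 1 <= a <= m -> 1 <= b <= n -> 1 <= c <= m -> 1 <= d <= n ->
  (a != c) || (b != d) -> a <= c.+1 -> c <= a.+1 -> b <= d.+1 -> d <= b.+1 ->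
  sg_adj m n (a, b) (c, d).
Proof.
move=> *; rewrite /sg_adj /in_grid /close /= xpair_eqE. apply/and5P; split; lia.
Qed.

Lemma path_colUp x k y w : 1 <= x <= m -> 1 <= y -> y + k <= n.+1 ->
  (k = 0 \/ e w (x, y)) -> path e w (colUp x y k).
Proof.
elim: k y w => [|k IH] y w //= Hx Hy Hk [//|Hw].
rewrite Hw /=; apply: IH; try lia.
case: k Hk => [|k] Hk; [by left | right; apply: adjI; lia].
Qed.
Lemma path_rowLR x k y w : 1 <= y <= n -> 1 <= x -> x + k <= m.+1 ->
  (k = 0 \/ e w (x, y)) -> path e w (rowLR x k y).
Proof.
elim: k x w => [|k IH] x w //= Hy Hx Hk [//|Hw].
rewrite Hw /=; apply: IH; try lia.
case: k Hk => [|k] Hk; [by left | right; apply: adjI; lia].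
Qed.
Lemma path_rowRL x k y w : 1 <= y <= n -> k <= x <= m ->
  (k = 0 \/ e w (x, y)) -> path e w (rowRL x k y).
Proof.
elim: k x w => [|k IH] x w //= Hy Hx [//|Hw].
rewrite Hw /=; apply: IH; try lia.
case: k Hx => [|k] Hx; [by left | right; apply: adjI; lia].
Qed.
Lemma path_zig x k y w : 1 <= y -> y.+1 <= n -> 1 <= x -> x + k <= m.+1 ->
  (k = 0 \/ e w (x, y.+1)) -> path e w (zig x k y).
Proof.
elim: k x w => [|k IH] x w //= Hy Hy' Hx Hk [//|Hw].
rewrite Hw /=; apply/andP; split; first by apply: adjI; lia.
apply: IH; try lia.
case: k Hk => [|k] Hk; [by left | right; apply: adjI; lia].
Qed.
End G.

Lemma last_colUp w x y k : last w (colUp x y k.+1) = (x, y + k).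
Proof. elim: k w y => [|k IH] w y; first by rewrite /= addn0. by rewrite -addSnnS -(IH w y.+1). Qed.
Lemma last_rowLR w x y k : last w (rowLR x k.+1 y) = (x + k, y).
Proof. elim: k w x => [|k IH] w x; first by rewrite /= addn0. by rewrite -addSnnS -(IH w x.+1). Qed.
Lemma last_rowRL w x y k : last w (rowRL x k.+1 y) = (x - k, y).
Proof. elim: k w x => [|k IH] w x; first by rewrite /= subn0. have -> : x - k.+1 = x.-1 - k by lia. by rewrite -(IH w x.-1). Qed.
Lemma last_zig w x y k : last w (zig x k.+1 y) = (x + k, y).
Proof. elim: k w x => [|k IH] w x; first by rewrite /= addn0. by rewrite -addSnnS -(IH w x.+1). Qed.

Fixpoint S (m : nat) (d : bool) (h : nat) : seq vertex :=
  match h with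
  | 0 => [::]
  | h'.+1 => if d then (if h' == 1 then zig 2 (m - 1) 2 else rowLR 2 (m - 1) h.+1 ++ S m false h')
             else rowRL m (m - 1) h.+1 ++ S m true h'
  end.

Lemma mem_S m d h a b : 2 <= m -> ((a, b) \in S m d h) = (2 <= a <= m) && (2 <= b <= h.+1).
Proof.
move=> Hm; elim: h d => [|h IH] d /=; first by rewrite in_nil; apply/idP/idP => H; lia.
case: d.
  case: eqP => [->|Hh]; first by rewrite mem_zig; apply/idP/idP => H; lia.
  by rewrite mem_cat mem_rowLR IH; apply/idP/idP => H; lia.
by rewrite mem_cat mem_rowRL ?IH; [apply/idP/idP => H; lia | lia].
Qed.

Lemma uniq_S m d h : 2 <= m -> uniq (S m d h).
Proof.
move=> Hm; elim: h d => [|h IH] d //=.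
case: d.
  case: eqP => [_|Hh]; first exact: uniq_zig.
  rewrite cat_uniq uniq_rowLR IH andbT /=; apply/hasPn => -[a b].
  rewrite mem_S // mem_rowLR; lia.
rewrite cat_uniq uniq_rowRL ?IH ?andbT /=; last lia; apply/hasPn => -[a b].
rewrite mem_S // mem_rowRL; lia.
Qed.

Lemma path_S m n h d w : 3 <= m -> 1 <= h -> h.+1 <= n ->
  sg_adj m n w (if d then (2, h.+1) else (m, h.+1)) ->
  path (sg_adj m n) w (S m d h) /\ (d || (2 <= h) -> last w (S m d h) = (m, 2)).
Proof.
move=> Hm; elim: h d w => [|h IH] d w //= _ Hn.
case: d => Hw.
  case: eqP => [Eh|Hh].
    subst h; split.
      apply: path_zig; try lia; right; exact: Hw.
    move=> _; rewrite (_ : m - 1 = (m - 2).+1); last lia.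
    rewrite last_zig; f_equal; lia.
  rewrite cat_path last_cat.
  case: h IH Hh Hn Hw => [|h] IH Hh Hn Hw.
    rewrite /= andbT (_ : m - 1 = (m - 2).+1); last lia.
    split; last by move=> _; rewrite last_rowLR; f_equal; lia.
    apply: path_rowLR; try lia; right; exact: Hw.
  rewrite (_ : m - 1 = (m - 2).+1); last lia.
  rewrite last_rowLR.
  have Ha : sg_adj m n (2 + (m - 2), h.+3) (m, h.+2) by apply: adjI; lia.
  have Hn' : h.+1 < n by lia.
  have [P1 P2] := IH false (2 + (m - 2), h.+3) isT Hn' Ha.
  split; last by move=> _; apply: P2; lia.
  rewrite P1 andbT; apply: path_rowLR; try lia; right; exact: Hw.
rewrite cat_path last_cat (_ : m - 1 = (m - 2).+1); last lia.
rewrite last_rowRL.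
case: h IH Hn Hw => [|h] IH Hn Hw.
  have -> : S m true 0 = [::] by [].
  split => //; rewrite andbT; apply: path_rowRL; try lia; right; exact: Hw.
have Ha : sg_adj m n (m - (m - 2), h.+3) (2, h.+2) by apply: adjI; lia.
have Hn' : h.+1 < n by lia.
have [P1 P2] := IH true (m - (m - 2), h.+3) isT Hn' Ha.
split; last by move=> _; apply: P2; lia.
rewrite P1 andbT; apply: path_rowRL; try lia; right; exact: Hw.
Qed.

Lemma rowRL_cat x a b y : rowRL x (a + b) y = rowRL x a y ++ rowRL (x - a) b y.
Proof.
elim: a x => [|a IH] x /=; first by rewrite subn0.
by rewrite IH (_ : x.-1 - a = x - a.+1) //; lia.
Qed.

Lemma nth_cat2 (d a b : vertex) q : nth d (q ++ [:: a; b]) (size q) = a /\ nth d (q ++ [:: a; b]) (size q).+1 = b.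
Proof. by elim: q. Qed.

Theorem lemma4 (m n : nat) : 3 <= m -> 2 <= n ->
  let s := (1, 1) in let t := (2, 1) in let z := (2, 1) in let f := (3, 1) in
  exists p : seq vertex, ham_path m n s t p /\ path_has_edge p z f.
Proof.
move=> Hm Hn /=.
have [n' En] : exists n', n = n'.+1 by exists n.-1; lia.
have Hm2 : 2 <= m by lia.
set R := rowRL m (m - 1) 1.
set Sq := S m true n'.
exists (colUp 1 1 n ++ Sq ++ R).
have ER : R = rowRL m (m - 3) 1 ++ [:: (3, 1); (2, 1)].
  rewrite /R (_ : m - 1 = m - 3 + 2); last lia.
  by rewrite rowRL_cat (_ : m - (m - 3) = 3) //; lia.
have memR : forall a b, ((a, b) \in R) = (1 < a <= m) && (b == 1).
  by move=> a b; rewrite /R mem_rowRL; [apply/idP/idP => H; lia | lia].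
have EC : colUp 1 1 n = (1, 1) :: colUp 1 2 n' by rewrite En.
split; last first.
  set q := colUp 1 1 n ++ Sq ++ rowRL m (m - 3) 1.
  have -> : colUp 1 1 n ++ Sq ++ R = q ++ [:: (3, 1); (2, 1)] by rewrite ER /q !catA.
  exists (size q); have [H1 H2] := nth_cat2 (2, 1) (3, 1) (2, 1) q.
  split; first by rewrite size_cat /=; lia.
  by right; split.
split; [split|split].
- by rewrite EC.
- by rewrite EC.
- rewrite !last_cat /R (_ : m - 1 = (m - 2).+1) ?last_rowRL; [f_equal; lia | lia].
- rewrite !cat_uniq uniq_colUp uniq_S // uniq_rowRL /=; last lia.
  rewrite andbT; apply/andP; split; apply/hasPn => -[a b].
    rewrite mem_cat mem_S // memR mem_colUp; lia.
  rewrite memR mem_S //; lia.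
- have LC : last (1, 1) (colUp 1 2 n') = (1, n).
    rewrite (_ : n' = (n' - 1).+1) ?last_colUp; [f_equal; lia | lia].
  have Ha : sg_adj m n (1, n) (2, n'.+1) by apply: adjI; lia.
  have [P1 P2] := path_S m n n' true (1, n) Hm (ltac:(lia) : 1 <= n') (ltac:(lia) : n'.+1 <= n) Ha.
  rewrite EC /= !cat_path; apply/and3P; split.
  + apply: path_colUp; try lia; right; apply: adjI; lia.
  + by rewrite LC.
  + rewrite LC P2 //; apply: path_rowRL; try lia; right; apply: adjI; lia.
- apply/allP => -[a b]; rewrite !mem_cat mem_colUp mem_S // memR /in_grid /=; lia.
- move=> [a b]; rewrite !mem_cat mem_colUp mem_S // memR /in_grid /=; lia.
Qed.
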